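(* Let $\mathbf{I}$ be a $d$-system of ideals in a ring $R$ and $A:=\mathscr{A}(R,\mathbf{I})$. The chain of idempotent ideals $0=J_d\subset J_{d-1}\subset\cdots\subset J_1\subset J_0=A$ has the property that, for every $1\le i\le d$, the left $A/J_i$-module $J_{i-1}/J_i$ is projective, and there is a ring isomorphism $e_i(A/J_i)e_i\cong R/I_{i,i+1}$.
   Context: A $d$-system of ideals in $R$ is a collection $\{I_{ij}\mid1\le i,j\le d+1\}$ of two-sided ideals with $I_{ij}I_{jk}\subset I_{ik}$ and $I_{ij}=R$ for $i\ge j$. $\mathscr{A}(R,\mathbf{I}):=\bigoplus_{1\le i,j\le d}I_{ij}/I_{i,d+1}$ with multiplication $(x+I_{i,d+1})(y+I_{k,d+1})=\delta_{jk}(xy+I_{i,d+1})\in I_{il}/I_{i,d+1}$ for $x\in I_{ij},y\in I_{kl}$. Put $e_k:=1+I_{k,d+1}\in I_{kk}/I_{k,d+1}$ for $1\le k\le d$, $f_j:=\sum_{k>j}e_k$ for $0\le j\le d$ ($f_0=1$, $f_d=0$), and $J_j:=Af_jA$. *)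

(* Defs.v *)
From HB Require Import structures.
From mathcomp Require Import all_boot all_order all_algebra.
From Stdlib Require Import ClassicalEpsilon.
Set Implicit Arguments. Unset Strict Implicit. Unset Printing Implicit Defensive.
Import GRing.Theory.
Local Open Scope ring_scope.
Local Open Scope quotient_scope.

Definition pb (P : Prop) : bool :=
  if excluded_middle_informative P then true else false.

Lemma pbP (P : Prop) : reflect P (pb P).
Proof. by rewrite /pb; case: excluded_middle_informative => h; constructor. Qed.

Record tsideal (S : pzRingType) := TSIdeal {
  tsmem :> S -> Prop;
  tsideal0 : tsmem 0;
  tsidealB : forall x y, tsmem x -> tsmem y -> tsmem (x - y);
  tsidealMl : forall a x, tsmem x -> tsmem (a * x);
  tsidealMr : forall a x, tsmem x -> tsmem (x * a) }.

Section TSIdealTheory.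
Variables (S : pzRingType) (J : tsideal S).
Lemma tsidealN x : J x -> J (- x).
Proof. by move=> h; rewrite -sub0r; apply: tsidealB => //; apply: tsideal0. Qed.
Lemma tsidealD x y : J x -> J y -> J (x + y).
Proof. by move=> hx hy; rewrite -[y]opprK; apply: tsidealB => //; apply: tsidealN. Qed.
Lemma tsidealBC x y : J (x - y) -> J (y - x).
Proof. by move=> h; rewrite -opprB; apply: tsidealN. Qed.
Lemma tsideal_sum (I : Type) (r : seq I) (P : pred I) (F : I -> S) :
  (forall i, P i -> J (F i)) -> J (\sum_(i <- r | P i) F i).
Proof.
move=> h; apply: (big_ind J) => //; [exact: tsideal0 | exact: tsidealD].
Qed.
End TSIdealTheory.

Section QuotRing.
Variables (S : pzRingType) (J : tsideal S).

Definition qequiv (x y : S) := pb (J (x - y)).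

Lemma qequivE x y : qequiv x y = pb (J (x - y)). Proof. by []. Qed.

Lemma qequiv_is_equiv : equiv_class_of qequiv.
Proof.
split=> [x|x y|y x z]; rewrite !qequivE.
- by rewrite subrr; apply/pbP; apply: tsideal0.
- by apply/pbP/pbP=> h; rewrite -opprB; apply: tsidealN.
- move=> /pbP h1 /pbP h2; apply/pbP.
  by rewrite -[x](addrNK y) -addrA; apply: tsidealD.
Qed.

Canonical qequiv_equiv := EquivRelPack qequiv_is_equiv.
Canonical qequiv_encModRel := defaultEncModRel qequiv.

Definition qring := {eq_quot qequiv}.
HB.instance Definition _ : EqQuotient S qequiv qring := EqQuotient.on qring.
HB.instance Definition _ := Choice.on qring.

Definition qzero : qring := lift_cst qring 0.
Definition qadd := lift_op2 qring +%R.
Definition qopp := lift_op1 qring -%R.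
Canonical pi_qzero_morph := PiConst qzero.

Lemma equiv_qpi x y : qequiv x y = (x == y %[mod qring]).
Proof. by rewrite piE. Qed.

Lemma repr_pi x : J (repr (\pi_qring x) - x).
Proof.
have /eqP : \pi_qring (repr (\pi_qring x)) = \pi_qring x by rewrite reprK.
by rewrite piE qequivE => /pbP.
Qed.

Lemma pi_qopp : {morph \pi_qring : x / - x >-> qopp x}.
Proof.
move=> x; unlock qopp; apply/eqP; rewrite piE qequivE; apply/pbP.
by rewrite opprK addrC; apply: repr_pi.
Qed.
Canonical pi_qopp_morph := PiMorph1 pi_qopp.

Lemma pi_qadd : {morph \pi_qring : x y / x + y >-> qadd x y}.
Proof.
move=> x y /=; unlock qadd; apply/eqP; rewrite piE qequivE; apply/pbP.
apply: tsidealBC.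
have -> : repr (\pi_qring x) + repr (\pi_qring y) - (x + y) =
   (repr (\pi_qring x) - x) + (repr (\pi_qring y) - y).
  by rewrite opprD addrACA.
by apply: tsidealD; apply: repr_pi.
Qed.
Canonical pi_qadd_morph := PiMorph2 pi_qadd.

Lemma qaddA : associative qadd.
Proof. by move=> x y z; rewrite -[x]reprK -[y]reprK -[z]reprK !piE addrA. Qed.
Lemma qaddC : commutative qadd.
Proof. by move=> x y; rewrite -[x]reprK -[y]reprK !piE addrC. Qed.
Lemma qadd0 : left_id qzero qadd.
Proof. by move=> x; rewrite -[x]reprK !piE add0r. Qed.
Lemma qaddN : left_inverse qzero qopp qadd.
Proof. by move=> x; rewrite -[x]reprK !piE addNr. Qed.

HB.instance Definition _ := GRing.isZmodule.Build qring qaddA qaddC qadd0 qaddN.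

Definition qone : qring := lift_cst qring 1.
Definition qmul := lift_op2 qring *%R.
Canonical pi_qone_morph := PiConst qone.

Lemma pi_qmul : {morph \pi_qring : x y / x * y >-> qmul x y}.
Proof.
move=> x y; unlock qmul; apply/eqP; rewrite piE qequivE; apply/pbP.
apply: tsidealBC.
set x' := repr _; set y' := repr _.
have -> : x' * y' - x * y = (x' - x) * y' + x * (y' - y).
  by rewrite mulrBl mulrBr addrA addrNK.
by apply: tsidealD; [apply: tsidealMr | apply: tsidealMl]; apply: repr_pi.
Qed.
Canonical pi_qmul_morph := PiMorph2 pi_qmul.

Lemma qmulA : associative qmul.
Proof. by move=> x y z; rewrite -[x]reprK -[y]reprK -[z]reprK !piE mulrA. Qed.
Lemma qmul1 : left_id qone qmul.
Proof. by move=> x; rewrite -[x]reprK !piE mul1r. Qed.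
Lemma qmulr1 : right_id qone qmul.
Proof. by move=> x; rewrite -[x]reprK !piE mulr1. Qed.
Lemma qmulDl : left_distributive qmul +%R.
Proof.
move=> x y z; rewrite -[x]reprK -[y]reprK -[z]reprK.
by rewrite /GRing.add /= !piE mulrDl.
Qed.
Lemma qmulDr : right_distributive qmul +%R.
Proof.
move=> x y z; rewrite -[x]reprK -[y]reprK -[z]reprK.
by rewrite /GRing.add /= !piE mulrDr.
Qed.

HB.instance Definition _ := GRing.Zmodule_isPzRing.Build qring
  qmulA qmul1 qmulr1 qmulDl qmulDr.

Definition qpi : S -> qring := \pi_qring.

Lemma qpiP x y : (qpi x = qpi y) <-> J (x - y).
Proof.
rewrite /qpi; split => [/eqP|h]; first by rewrite piE qequivE => /pbP.
by apply/eqP; rewrite piE qequivE; apply/pbP.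
Qed.

End QuotRing.

Section QuotMorph.
Variables (S : pzRingType) (J : tsideal S).
Lemma qpiD x y : qpi J (x + y) = qpi J x + qpi J y.
Proof. by rewrite /qpi [RHS]/GRing.add /= piE. Qed.
Lemma qpiM x y : qpi J (x * y) = qpi J x * qpi J y.
Proof. by rewrite /qpi [RHS]/GRing.mul /= piE. Qed.
Lemma qpiN x : qpi J (- x) = - qpi J x.
Proof. by rewrite /qpi [RHS]/GRing.opp /= piE. Qed.
Lemma qpi0 : qpi J 0 = 0.
Proof. by rewrite /qpi [RHS]/GRing.zero /= piE. Qed.
Lemma qpi_surj (y : qring J) : exists x, qpi J x = y.
Proof. by exists (repr y); rewrite /qpi reprK. Qed.
End QuotMorph.

Section GenIdeal.
Variables (S : pzRingType) (x : S).
Definition genmem (a : S) : Prop :=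
  exists s : seq (S * S), a = \sum_(p <- s) p.1 * x * p.2.
Lemma gen0 : genmem 0. Proof. by exists [::]; rewrite big_nil. Qed.
Lemma genB a b : genmem a -> genmem b -> genmem (a - b).
Proof.
move=> [s ->] [t ->]; exists (s ++ [seq (- p.1, p.2) | p <- t]).
by rewrite big_cat big_map /= -sumrN; congr (_ + _); apply: eq_bigr => p _;
  rewrite !mulNr.
Qed.
Lemma genMl c a : genmem a -> genmem (c * a).
Proof.
move=> [s ->]; exists [seq (c * p.1, p.2) | p <- s].
by rewrite big_map mulr_sumr; apply: eq_bigr => p _; rewrite !mulrA.
Qed.
Lemma genMr c a : genmem a -> genmem (a * c).
Proof.
move=> [s ->]; exists [seq (p.1, p.2 * c) | p <- s].
by rewrite big_map mulr_suml; apply: eq_bigr => p _; rewrite !mulrA.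
Qed.
Definition genideal : tsideal S := TSIdeal gen0 genB genMl genMr.
End GenIdeal.

Section ImageIdeal.
Variables (S : pzRingType) (J K : tsideal S).
Definition imgmem (y : qring J) : Prop := exists2 a, K a & qpi J a = y.
Lemma img0 : imgmem 0. Proof. by exists 0; [apply: tsideal0 | apply: qpi0]. Qed.
Lemma imgB a b : imgmem a -> imgmem b -> imgmem (a - b).
Proof.
move=> [u hu <-] [v hv <-]; exists (u - v); first exact: tsidealB.
by rewrite qpiD qpiN.
Qed.
Lemma imgMl c a : imgmem a -> imgmem (c * a).
Proof.
move=> [u hu <-]; have [c' <-] := qpi_surj c.
by exists (c' * u); [apply: tsidealMl | rewrite qpiM].
Qed.
Lemma imgMr c a : imgmem a -> imgmem (a * c).
Proof.
move=> [u hu <-]; have [c' <-] := qpi_surj c.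
by exists (u * c'); [apply: tsidealMr | rewrite qpiM].
Qed.
Definition imgideal : tsideal (qring J) := TSIdeal img0 imgB imgMl imgMr.
End ImageIdeal.

Section IdealModule.
Variables (S : pzRingType) (L : tsideal S).
Definition Lpred : {pred S} := fun x => pb (L x).
Lemma Lpred_zmod : zmod_closed Lpred.
Proof.
split; first by apply/pbP; apply: tsideal0.
by move=> x y /pbP hx /pbP hy; apply/pbP; apply: tsidealB.
Qed.
HB.instance Definition _ := GRing.isZmodClosed.Build S Lpred Lpred_zmod.
Record idealmod := IdealMod { imval :> S; _ : Lpred imval }.
HB.instance Definition _ := [isSub for imval].
HB.instance Definition _ := [Choice of idealmod by <:].
HB.instance Definition _ := [SubChoice_isSubZmodule of idealmod by <:].
Lemma iscale_subproof (a : S) (m : idealmod) : Lpred (a * val m).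
Proof. by case: m => m h /=; apply/pbP; apply: tsidealMl; apply/pbP. Qed.
Definition iscale a m := IdealMod (iscale_subproof a m).
Lemma iscaleA a b m : iscale a (iscale b m) = iscale (a * b) m.
Proof. by apply: val_inj; rewrite /= mulrA. Qed.
Lemma iscale1 : left_id 1 iscale.
Proof. by move=> m; apply: val_inj; rewrite /= mul1r. Qed.
Lemma iscaleDr : right_distributive iscale +%R.
Proof. by move=> a m n; apply: val_inj; rewrite /= mulrDr. Qed.
Lemma iscaleDl m : {morph iscale^~ m : a b / a + b}.
Proof. by move=> a b; apply: val_inj; rewrite /= mulrDl. Qed.
HB.instance Definition _ := GRing.Zmodule_isLmodule.Build S idealmod
  iscaleA iscale1 iscaleDr iscaleDl.
End IdealModule.

Record idempotent (S : pzRingType) := Idempotent {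
  idem_val :> S; idem_idem : idem_val * idem_val = idem_val }.

Section Corner.
Variables (S : pzRingType) (e0 : idempotent S).
Local Notation e := (idem_val e0).
Definition cpred : {pred S} := fun x : S => e * x * e == x.
Lemma cpred_zmod : zmod_closed cpred.
Proof.
split; first by rewrite unfold_in /cpred /= mulr0 mul0r.
by move=> x y; rewrite !unfold_in /cpred /= => /eqP hx /eqP hy; apply/eqP; rewrite mulrBr mulrBl hx hy.
Qed.
HB.instance Definition _ := GRing.isZmodClosed.Build S cpred cpred_zmod.
Record corner := Corner { cval :> S; _ : cpred cval }.
HB.instance Definition _ := [isSub for cval].
HB.instance Definition _ := [Choice of corner by <:].
HB.instance Definition _ := [SubChoice_isSubZmodule of corner by <:].
Lemma cone_subproof : cpred e.
Proof. by rewrite /cpred !idem_idem. Qed.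
Definition cone := Corner cone_subproof.
Lemma cmul_subproof (x y : corner) : cpred (val x * val y).
Proof.
case: x => x hx'; case: y => y hy' /=; have hx := eqP hx'; have hy := eqP hy'; apply/eqP.
have ex : e * x = x by rewrite -{1}hx !mulrA idem_idem.
have ye : y * e = y by rewrite -{1}hy -!mulrA idem_idem !mulrA.
by rewrite !mulrA ex -mulrA ye.
Qed.
Definition cmul x y := Corner (cmul_subproof x y).
Lemma cmulA : associative cmul.
Proof. by move=> x y z; apply: val_inj; rewrite /= mulrA. Qed.
Lemma cmul1 : left_id cone cmul.
Proof. by move=> [x hx']; have hx := eqP hx'; apply: val_inj; rewrite /= -{1}hx !mulrA idem_idem. Qed.
Lemma cmulr1 : right_id cone cmul.
Proof. by move=> [x hx']; have hx := eqP hx'; apply: val_inj; rewrite /= -{1}hx -!mulrA idem_idem !mulrA. Qed.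
Lemma cmulDl : left_distributive cmul +%R.
Proof. by move=> x y z; apply: val_inj; rewrite /= mulrDl. Qed.
Lemma cmulDr : right_distributive cmul +%R.
Proof. by move=> x y z; apply: val_inj; rewrite /= mulrDr. Qed.
HB.instance Definition _ := GRing.Zmodule_isPzRing.Build corner
  cmulA cmul1 cmulr1 cmulDl cmulDr.
End Corner.

(* d-systems of ideals; paper indices 1..d+1 are shifted to 0..d *)
Record dsystem (R : pzRingType) (d : nat) := DSystem {
  dsI : 'I_d.+1 -> 'I_d.+1 -> tsideal R;
  dsI_full : forall i j : 'I_d.+1, (j <= i)%N -> forall x : R, dsI i j x;
  dsI_mul : forall (i j k : 'I_d.+1) (x y : R),
      dsI i j x -> dsI j k y -> dsI i k (x * y) }.

Section DAlgebra.
Variables (R : pzRingType) (d : nat) (D : dsystem R d).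
Local Notation w := (widen_ord (leqnSn d)).
Local Notation I := (dsI D).

Definition lampred : {pred 'M[R]_d} :=
  fun x => pb (forall i j : 'I_d, I (w i) (w j) (x i j)).

Lemma lam_subring : subring_closed lampred.
Proof.
split.
- apply/pbP => i j; rewrite mxE; case: eqP => [->|_].
    by apply: dsI_full.
  by apply: tsideal0.
- move=> x y /pbP hx /pbP hy; apply/pbP => i j; rewrite !mxE.
  by apply: tsidealB.
- move=> x y /pbP hx /pbP hy; apply/pbP => i j; rewrite !mxE.
  apply: tsideal_sum => k _; exact: (dsI_mul (hx i k) (hy k j)).
Qed.
HB.instance Definition _ := GRing.isSubringClosed.Build _ lampred lam_subring.
Record lam := Lam { lamval :> 'M[R]_d; _ : lampred lamval }.
HB.instance Definition _ := [isSub for lamval].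
HB.instance Definition _ := [Choice of lam by <:].
HB.instance Definition _ := GRing.SubChoice_isSubPzRing.Build _ _ lam lam_subring.

Lemma lamP (x : lam) i j : I (w i) (w j) (lamval x i j).
Proof. by case: x => x /= /pbP. Qed.

(* the ideal N = (I_{i,d+1})_{i,j} of lam; A := lam / N *)
Definition Nmem (x : lam) : Prop := forall i j : 'I_d, I (w i) ord_max (lamval x i j).
Lemma N0 : Nmem 0. Proof. by move=> i j; rewrite mxE; apply: tsideal0. Qed.
Lemma NB x y : Nmem x -> Nmem y -> Nmem (x - y).
Proof. by move=> hx hy i j; rewrite /= !mxE; apply: tsidealB. Qed.
Lemma NMl a x : Nmem x -> Nmem (a * x).
Proof.
move=> hx i j; rewrite /= !mxE; apply: tsideal_sum => k _.
exact: (dsI_mul (lamP a i k) (hx k j)).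
Qed.
Lemma NMr a x : Nmem x -> Nmem (x * a).
Proof.
move=> hx i j; rewrite /= !mxE; apply: tsideal_sum => k _.
exact: tsidealMr.
Qed.
Definition Nideal : tsideal lam := TSIdeal N0 NB NMl NMr.

Definition Aalg := qring Nideal.


(* the idempotents e_k (paper index k+1) *)
Lemma delta_lam (k : 'I_d) : lampred (delta_mx k k).
Proof.
apply/pbP => i j; rewrite mxE; case: andP => [[/eqP -> /eqP ->]|_].
  by apply: dsI_full.
by apply: tsideal0.
Qed.
Definition elam (k : 'I_d) : lam := Lam (delta_lam k).
Definition eA (k : 'I_d) : Aalg := qpi Nideal (elam k).

(* f_j = sum of the e_k with (paper) k > j, i.e. 0-based k >= j *)
Definition fA (j : nat) : Aalg := \sum_(k < d | (j <= k)%N) eA k.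

Definition JA (j : nat) : tsideal Aalg := genideal (fA j).

Definition AJ (j : nat) := qring (JA j).

Lemma elam_idem k : elam k * elam k = elam k.
Proof. by apply: val_inj; change (delta_mx k k *m delta_mx k k = delta_mx k k :> 'M[R]_d); rewrite mul_delta_mx. Qed.

Lemma eAJ_idem (t : 'I_d) :
  qpi (JA t.+1) (eA t) * qpi (JA t.+1) (eA t) = qpi (JA t.+1) (eA t).
Proof. by rewrite -qpiM /eA -qpiM elam_idem. Qed.

(* the idempotent e_i of A / J_i, for paper index i = t+1 *)
Definition eAJ (t : 'I_d) : idempotent (AJ t.+1) := Idempotent (eAJ_idem t).

(* the left A/J_i-module J_{i-1}/J_i (paper index i = t+1), realised as the
   image of J_{i-1} in A/J_i *)
Definition Jquot (t : 'I_d) : lmodType (AJ t.+1) :=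
  idealmod (imgideal (JA t.+1) (JA t)).

(* R / I_{i,i+1} for paper index i = t+1 *)
Definition RI (t : 'I_d) := qring (I (w t) (lift ord0 t)).

End DAlgebra.

Definition projective (S : pzRingType) (M : lmodType S) : Prop :=
  forall (N P : lmodType S) (g : {linear N -> P}) (f : {linear M -> P}),
    (forall y : P, exists x : N, g x = y) ->
    exists h : {linear M -> N}, forall m : M, g (h m) = f m.

(* Main.v *)
Require Import Defs.
From HB Require Import structures.
From mathcomp Require Import all_boot all_order all_algebra.
From Stdlib Require Import ClassicalEpsilon.
Import GRing.Theory.
Local Open Scope ring_scope.

Section QpiExtra.
Variables (S : pzRingType) (J : tsideal S).
Lemma qpi_sum (I0 : Type) (r : seq I0) (P : pred I0) (F : I0 -> S) :
  qpi J (\sum_(i <- r | P i) F i) = \sum_(i <- r | P i) qpi J (F i).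
Proof. exact: (big_morph _ (qpiD J) (qpi0 J)). Qed.
Lemma qpiB x y : qpi J (x - y) = qpi J x - qpi J y.
Proof. by rewrite qpiD qpiN. Qed.
Lemma qpiK (x : qring J) : qpi J (repr x) = x.
Proof. by rewrite /qpi reprK. Qed.
Lemma qpi_eq0 x : qpi J x = 0 <-> J x.
Proof.
rewrite -(qpi0 J); split => [/qpiP|h]; first by rewrite subr0.
by apply/qpiP; rewrite subr0.
Qed.
Lemma qpi1 : qpi J 1 = 1.
Proof. by rewrite /qpi [RHS]/GRing.one /= piE. Qed.
End QpiExtra.

Lemma sum_sel (R : pzRingType) n (P : pred 'I_n) (l : 'I_n) (F : 'I_n -> R) :
  \sum_(j < n | P j) (if l == j then F j else 0) = if P l then F l else 0.
Proof.
rewrite big_mkcond /=.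
transitivity (\sum_(j < n) (if j == l then (if P j then F j else 0) else 0)).
  by apply: eq_bigr => j _; rewrite [l == j]eq_sym; case: eqP => [->|]; case: (P _).
by rewrite -big_mkcond big_pred1_eq.
Qed.

Lemma sum_if1 (R : pzRingType) n (c : 'I_n) (F : 'I_n -> R) :
  \sum_(k < n) (if k == c then F k else 0) = F c.
Proof. by rewrite -big_mkcond big_pred1_eq. Qed.

Section Main.
Variables (R : pzRingType) (d : nat) (D : dsystem R d).
Local Notation I := (dsI D).
Local Notation w := (widen_ord (leqnSn d)).
Local Notation lamT := (lam D).
Local Notation N := (Nideal D).

Lemma lamvalD (x y : lamT) : lamval (x + y) = lamval x + lamval y. Proof. by []. Qed.
Lemma lamvalB (x y : lamT) : lamval (x - y) = lamval x - lamval y. Proof. by []. Qed.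
Lemma lamvalM (x y : lamT) : lamval (x * y) = lamval x *m lamval y. Proof. by []. Qed.
Lemma lamval1 : lamval (1 : lamT) = 1%:M. Proof. by []. Qed.
Lemma lamval0 : lamval (0 : lamT) = 0. Proof. by []. Qed.
Lemma lamvalBE (x y : lamT) i j : lamval (x - y) i j = lamval x i j - lamval y i j.
Proof. by rewrite lamvalB !mxE. Qed.
Lemma lamvalDE (x y : lamT) i j : lamval (x + y) i j = lamval x i j + lamval y i j.
Proof. by rewrite lamvalD mxE. Qed.
Lemma lamval_sum (I0 : Type) (r : seq I0) (P : pred I0) (F : I0 -> lamT) :
  lamval (\sum_(i <- r | P i) F i) = \sum_(i <- r | P i) lamval (F i).
Proof. exact: (big_morph (@lamval _ _ D) (fun x y => erefl) erefl). Qed.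

Lemma lam_ext (x y : lamT) : lamval x = lamval y -> x = y.
Proof. exact: val_inj. Qed.

Lemma wE (i : 'I_d) : w i = inord i.
Proof. by apply: val_inj; rewrite /= inordK // ltnS ltnW. Qed.
Lemma ordmaxE : (ord_max : 'I_d.+1) = inord d.
Proof. by apply: val_inj; rewrite /= inordK. Qed.

Lemma Ifull (a b : nat) x : (b <= a <= d)%N -> I (inord a) (inord b) x.
Proof.
move=> /andP[ba ad]; apply: dsI_full; rewrite !inordK ?ltnS //.
exact: leq_trans ba ad.
Qed.

Lemma Imono (i a b : nat) x : (a <= b <= d)%N -> I (inord i) (inord b) x -> I (inord i) (inord a) x.
Proof. move=> h hx; rewrite -[x]mulr1; apply: dsI_mul hx _; exact: Ifull. Qed.

Lemma lamP' (x : lamT) (i j : 'I_d) : I (inord i) (inord j) (lamval x i j).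
Proof. by rewrite -!wE; apply: lamP. Qed.

Definition Kmem (s : nat) (x : lamT) :=
  forall i j : 'I_d, I (inord i) (inord (maxn j s)) (lamval x i j).

Section K.
Variables (s : nat) (hs : (s <= d)%N).
Lemma K0 : Kmem s 0.
Proof. by move=> i j; rewrite mxE; exact: tsideal0. Qed.
Lemma KB x y : Kmem s x -> Kmem s y -> Kmem s (x - y).
Proof. by move=> hx hy i j; rewrite lamvalB !mxE; apply: tsidealB. Qed.
Lemma KMl a x : Kmem s x -> Kmem s (a * x).
Proof.
move=> hx i j; rewrite lamvalM !mxE; apply: tsideal_sum => k _.
exact: dsI_mul (lamP' a i k) (hx k j).
Qed.
Lemma KMr a x : Kmem s x -> Kmem s (x * a).
Proof.
move=> hx i j; rewrite lamvalM !mxE; apply: tsideal_sum => k _ /=.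
case: (leqP s j) => sj.
-   apply: dsI_mul _ (lamP' a k j); apply: Imono (hx i k).
  by rewrite leq_maxl geq_max hs ltnW.
-   apply: dsI_mul (hx i k) _; apply: Ifull.
  by rewrite leq_maxr geq_max hs ltnW.
Qed.
Definition Kideal : tsideal lamT := TSIdeal K0 KB KMl KMr.
Lemma KD x y : Kmem s x -> Kmem s y -> Kmem s (x + y).
Proof. exact: (@tsidealD _ Kideal). Qed.
Lemma Ksum (I0 : Type) (r : seq I0) (P : pred I0) (F : I0 -> lamT) :
  (forall i, P i -> Kmem s (F i)) -> Kmem s (\sum_(i <- r | P i) F i).
Proof. exact: (@tsideal_sum _ Kideal). Qed.
Lemma NK x : N x -> Kmem s x.
Proof.
move=> hx i j; have := hx i j; rewrite wE ordmaxE; apply: Imono.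
by rewrite geq_max hs ltnW /=.
Qed.
End K.

Definition Flam (s : nat) : lamT := \sum_(k < d | (s <= k)%N) elam D k.
Lemma fAE s : fA D s = qpi N (Flam s).
Proof. by rewrite /fA qpi_sum. Qed.

Lemma FlamE s (i l : 'I_d) : lamval (Flam s) i l = ((i == l) && (s <= l)%N)%:R.
Proof.
rewrite lamval_sum summxE.
case: (boolP ((i == l) && (s <= l)%N)) => [/andP[/eqP il sl]|h].
- rewrite (bigD1 l) //= mxE il eqxx big1 ?addr0 // => k /andP[_ kl].
  by rewrite mxE [l == k]eq_sym (negbTE kl) andbF.
- rewrite big1 // => k sk; rewrite mxE.
  case: (boolP ((i == k) && (l == k))) => // /andP[/eqP ik /eqP lk].
  by move: h; rewrite ik lk eqxx sk.
Qed.

Lemma KF s : (s <= d)%N -> Kmem s (Flam s).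
Proof.
move=> hs i j; rewrite FlamE.
case: (boolP ((i == j) && (s <= j)%N)) => [/andP[/eqP -> sj]|_]; last exact: tsideal0.
by apply: Ifull; rewrite (maxn_idPl sj) leqnn ltnW.
Qed.

Lemma JA_K s x : (s <= d)%N -> JA D s (qpi N x) -> Kmem s x.
Proof.
move=> hs [sq hsq].
set S := \sum_(p <- sq) repr p.1 * Flam s * repr p.2.
have e : qpi N x = qpi N S.
  by rewrite hsq /S qpi_sum; apply: eq_bigr => p _; rewrite !qpiM -fAE !qpiK.
move/qpiP: e => hN.
have -> : x = (x - S) + S by rewrite subrK.
apply: KD => //; first exact: NK.
apply: Ksum => // p _.
apply: KMr => //; apply: KMl => //; exact: KF.
Qed.


Definition shm (s j : 'I_d) (x : lamT) : 'M[R]_d :=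
  \matrix_(i, l) (if (l == s) && pb (I (w i) (w s) (lamval x i j)) then lamval x i j else 0).
Lemma sh_lam s j x : lampred D (shm s j x).
Proof.
apply/pbP => i l; rewrite mxE; case: ifP => [/andP[/eqP -> /pbP h]|_] //.
exact: tsideal0.
Qed.
Definition Sh s j x : lamT := Lam (sh_lam s j x).

Definition egm (a b : 'I_d) : 'M[R]_d :=
  \matrix_(i, l) ((i == a) && (l == b) && (b <= a)%N)%:R.
Lemma eg_lam a b : lampred D (egm a b).
Proof.
apply/pbP => i l; rewrite mxE.
case: (boolP ((i == a) && (l == b) && (b <= a)%N)) => [/andP[/andP[/eqP -> /eqP ->] ba]|_].
  by apply: dsI_full.
exact: tsideal0.
Qed.
Definition Eg a b : lamT := Lam (eg_lam a b).

Lemma EgE a b i l : lamval (Eg a b) i l = ((i == a) && (l == b) && (b <= a)%N)%:R.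
Proof. by rewrite /= mxE. Qed.

Lemma ShE s j x i l : lamval (Sh s j x) i l =
  if (l == s) && pb (I (w i) (w s) (lamval x i j)) then lamval x i j else 0.
Proof. by rewrite /= mxE. Qed.

Lemma mulFE s (A : 'M[R]_d) i l :
  (A *m lamval (Flam s)) i l = if (s <= l)%N then A i l else 0.
Proof.
rewrite mxE; under eq_bigr => k _ do rewrite FlamE mulr_natr mulrb.
case: (s <= l)%N; last by rewrite big1 // => k _; rewrite andbF.
by under eq_bigr => k _ do rewrite andbT; rewrite sum_if1.
Qed.

Lemma ShF (s j : 'I_d) x : lamval (Sh s j x) *m lamval (Flam s) = lamval (Sh s j x).
Proof.
apply/matrixP => i l; rewrite mulFE ShE.
case: (leqP s l) => // ls.
have -> : (l == s) = false by apply/eqP => e; move: ls; rewrite e ltnn.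
by [].
Qed.

Lemma ShEgE (s j : 'I_d) x i l : (lamval (Sh s j x) *m lamval (Eg s j)) i l =
  if l == j then (if (j <= s)%N then lamval (Sh s j x) i s else 0) else 0.
Proof.
rewrite mxE.
under eq_bigr => k _ do rewrite EgE mulr_natr mulrb.
transitivity (\sum_(k < d) (if k == s then (if (l == j) && (j <= s)%N then lamval (Sh s j x) i k else 0) else 0)).
  by apply: eq_bigr => k _; case: (k =P s) => [->|ks] /=.
rewrite sum_if1; case: (l == j) => //.
Qed.

Lemma genM s a b : JA D s (qpi N (a * Flam s * b)).
Proof.
exists [:: (qpi N a, qpi N b)]; by rewrite big_seq1 /= !qpiM fAE.
Qed.

Lemma K_JA s x : (s <= d)%N -> Kmem s x -> JA D s (qpi N x).
Proof.
move=> hs hx; case: (ltnP s d) => sd; last first.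
  have sd' : s = d by apply/eqP; rewrite eqn_leq hs sd.
  have -> : qpi N x = 0.
    apply/qpi_eq0 => i j; rewrite wE ordmaxE; have := hx i j.
    by rewrite sd' (maxn_idPr _) // ltnW.
  exact: tsideal0.
set s' : 'I_d := Ordinal sd.
have ex : x = x * Flam s * 1 + \sum_(j < d | (j < s)%N) Sh s' j x * Flam s * Eg s' j.
  apply: lam_ext; apply/matrixP => i l.
  have e1 : lamval (x * Flam s * 1) i l = if (s <= l)%N then lamval x i l else 0.
    by rewrite !lamvalM lamval1 mulmx1 mulFE.
  have e2 : lamval (\sum_(j < d | (j < s)%N) Sh s' j x * Flam s * Eg s' j) i l =
      if (l < s)%N then lamval (Sh s' l x) i s' else 0.
    rewrite lamval_sum summxE.
    under eq_bigr => j _ do rewrite !lamvalM ShF ShEgE.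
    rewrite sum_sel; case: ifP => // ls; by rewrite ltnW.
  rewrite lamvalD mxE e1 e2.
  case: (leqP s l) => sl; first by rewrite addr0.
  rewrite add0r ShE eqxx /=.
  have h : I (w i) (w s') (lamval x i l).
    by rewrite !wE /=; have := hx i l; rewrite (maxn_idPr _) // ltnW.
  by case: pbP.
rewrite ex qpiD qpi_sum; apply: tsidealD; first exact: genM.
by apply: tsideal_sum => j _; exact: genM.
Qed.


Section T.
Variable t : 'I_d.
Local Notation JJ := (JA D t.+1).
Definition pim (x : lamT) : AJ D t.+1 := qpi JJ (qpi N x).
Lemma ht : (t <= d)%N. Proof. exact: ltnW. Qed.
Lemma ht1 : (t.+1 <= d)%N. Proof. exact: ltn_ord. Qed.

Lemma pimD x y : pim (x + y) = pim x + pim y. Proof. by rewrite /pim !qpiD. Qed.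
Lemma pimB x y : pim (x - y) = pim x - pim y. Proof. by rewrite /pim !qpiB. Qed.
Lemma pimM x y : pim (x * y) = pim x * pim y. Proof. by rewrite /pim !qpiM. Qed.
Lemma pim_sum (I0 : Type) (r : seq I0) (P : pred I0) (F : I0 -> lamT) :
  pim (\sum_(i <- r | P i) F i) = \sum_(i <- r | P i) pim (F i).
Proof. by rewrite /pim !qpi_sum. Qed.
Lemma pimK y : pim (repr (repr y)) = y. Proof. by rewrite /pim !qpiK. Qed.

Lemma pimP x y : pim x = pim y <-> Kmem t.+1 (x - y).
Proof.
rewrite /pim; split.
  by move/qpiP; rewrite -qpiB => h; apply: JA_K ht1 h.
by move=> h; apply/qpiP; rewrite -qpiB; apply: K_JA ht1 h.
Qed.

Local Notation M := (Jquot D t).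

Lemma Mrep (m : M) : exists x, Kmem t x /\ pim x = imval m.
Proof.
case: m => y /= /pbP [a ha ay]; exists (repr a); split.
  by apply: JA_K ht _; rewrite qpiK.
by rewrite /pim qpiK.
Qed.

Definition rep (m : M) : lamT :=
  epsilon (inhabits 0) (fun x => Kmem t x /\ pim x = imval m).
Lemma repP m : Kmem t (rep m) /\ pim (rep m) = imval m.
Proof. exact: (epsilon_spec (inhabits 0) _ (Mrep m)). Qed.

Definition phj (j : 'I_d) (m : M) : AJ D t.+1 := pim (Sh t j (rep m)).

Lemma ShK (j : 'I_d) x : (j <= t)%N -> Kmem t x -> forall i l,
  lamval (Sh t j x) i l = if l == t then lamval x i j else 0.
Proof.
move=> jt hx i l; rewrite ShE; case: (l == t) => //=.
have h : I (w i) (w t) (lamval x i j).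
  by rewrite !wE; have := hx i j; rewrite (maxn_idPr _).
by case: pbP.
Qed.

Lemma Sh_add (j : 'I_d) x y : (j <= t)%N -> Kmem t x -> Kmem t y ->
  Sh t j (x + y) = Sh t j x + Sh t j y.
Proof.
move=> jt hx hy; apply: lam_ext; apply/matrixP => i l.
rewrite [LHS](@ShK j _ jt (KD _ ht _ _ hx hy)).
rewrite [in RHS]lamvalD [in RHS]mxE !ShK //.
by case: (l == t); rewrite ?addr0 // lamvalD mxE.
Qed.

Lemma Sh_mul (j : 'I_d) a x : (j <= t)%N -> Kmem t x -> Sh t j (a * x) = a * Sh t j x.
Proof.
move=> jt hx; apply: lam_ext; apply/matrixP => i l.
rewrite [LHS](@ShK j _ jt (KMl _ a _ hx)) [in RHS]lamvalM [in RHS]mxE.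
under eq_bigr => k _ do rewrite (@ShK j _ jt hx).
case: (l == t); last by rewrite big1 // => k _; rewrite mulr0.
by rewrite lamvalM mxE.
Qed.

Lemma Sh_wd (j : 'I_d) x y : (j <= t)%N -> Kmem t x -> Kmem t y -> pim x = pim y ->
  pim (Sh t j x) = pim (Sh t j y).
Proof.
move=> jt hx hy /pimP h; apply/pimP => i l.
rewrite lamvalBE !ShK //.
case: eqP => [->|_] /=; last by rewrite subr0; exact: tsideal0.
have := h i j; rewrite lamvalBE.
by rewrite (maxn_idPr (leqnSn t)) (maxn_idPr (leqW jt)).
Qed.

Lemma phj_lin (j : 'I_d) a (m m' : M) : (j <= t)%N ->
  phj j (a *: m + m') = a * phj j m + phj j m'.
Proof.
move=> jt; have [h1 h2] := repP m; have [h1' h2'] := repP m'.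
have [h1'' h2''] := repP (a *: m + m').
set b := repr (repr a).
have hz : Kmem t (b * rep m + rep m') by apply: KD => //; [exact: ht | apply: KMl => //; exact: ht].
rewrite /phj (@Sh_wd j _ _ jt h1'' hz); last first.
  by rewrite h2'' pimD pimM h2 h2' pimK.
rewrite (@Sh_add j _ _ jt _ h1') ?(@Sh_mul j _ _ jt h1) ?pimD ?pimM ?pimK //.
exact: KMl.
Qed.

Lemma Eg_K (j : 'I_d) : Kmem t (Eg t j).
Proof.
move=> i l; rewrite EgE.
case: (boolP ((i == t) && (l == j) && (j <= t)%N)) => [/andP[/andP[/eqP -> /eqP ->] jt]|_]; last exact: tsideal0.
by apply: Ifull; rewrite (maxn_idPr jt) leqnn ht.
Qed.

Lemma mj_subproof (j : 'I_d) : Lpred (imgideal JJ (JA D t)) (pim (Eg t j)).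
Proof. apply/pbP; exists (qpi N (Eg t j)) => //; apply: K_JA ht (Eg_K j). Qed.
Definition mj (j : 'I_d) : M := IdealMod (mj_subproof j).

Lemma imval_sum (I0 : Type) (r : seq I0) (P : pred I0) (F : I0 -> M) :
  imval (\sum_(i <- r | P i) F i) = \sum_(i <- r | P i) imval (F i).
Proof. exact: (big_morph (@imval _ _) (fun x y => erefl) erefl). Qed.

Lemma recon (m : M) : m = \sum_(j < d | (j <= t)%N) phj j m *: mj j.
Proof.
apply: val_inj; rewrite /= imval_sum.
have [h1 h2] := repP m.
transitivity (pim (\sum_(j < d | (j <= t)%N) Sh t j (rep m) * Eg t j)); last first.
  by rewrite pim_sum; apply: eq_bigr => j _; rewrite pimM.
rewrite -h2; apply/pimP => i l.
rewrite lamvalBE lamval_sum summxE.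
under eq_bigr => j _ do rewrite lamvalM ShEgE.
rewrite sum_sel; case: (leqP l t) => lt.
  by rewrite ShK // eqxx subrr; exact: tsideal0.
rewrite subr0 (maxn_idPl lt); exact: lamP'.
Qed.



Definition hfun (V : lmodType (AJ D t.+1)) (nn : 'I_d -> V) (m : M) : V :=
  \sum_(j < d | (j <= t)%N) phj j m *: nn j.
Lemma hfun_lin V nn : linear (@hfun V nn).
Proof.
move=> a m m'; rewrite /hfun scaler_sumr -big_split /=; apply: eq_bigr => j jt.
by rewrite phj_lin // scalerDl scalerA.
Qed.
HB.instance Definition _ (V : lmodType (AJ D t.+1)) (nn : 'I_d -> V) :=
  GRing.isLinear.Build (AJ D t.+1) M V *:%R (@hfun V nn) (@hfun_lin V nn).

Lemma projM : projective M.
Proof.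
move=> V P g f gs.
pose nn j := epsilon (inhabits 0) (fun n => g n = f (mj j)).
have hn j : g (nn j) = f (mj j).
  by apply: (epsilon_spec (inhabits 0) (fun n => g n = f (mj j))); exact: gs.
exists (@hfun V nn) => m.
rewrite /hfun linear_sum (recon m) linear_sum; apply: eq_bigr => j _.
by rewrite !linearZ /= hn -recon.
Qed.


Definition rm (r : R) : 'M[R]_d := \matrix_(i, l) (if (i == t) && (l == t) then r else 0).
Lemma rm_lam r : lampred D (rm r).
Proof.
apply/pbP => i l; rewrite mxE; case: ifP => [/andP[/eqP -> /eqP ->]|_].
  by apply: dsI_full.
exact: tsideal0.
Qed.
Definition rE r : lamT := Lam (rm_lam r).
Lemma rEE r i l : lamval (rE r) i l = if (i == t) && (l == t) then r else 0.
Proof. by rewrite /= mxE. Qed.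

Lemma elamE k i l : lamval (elam D k) i l = ((i == k) && (l == k))%:R.
Proof. by rewrite /= mxE. Qed.

Lemma mulER (A : 'M[R]_d) i l : (A *m lamval (elam D t)) i l = if l == t then A i t else 0.
Proof.
rewrite mxE; under eq_bigr => k _ do rewrite elamE mulr_natr mulrb.
case: (l == t); last by rewrite big1 // => k _; rewrite andbF.
by under eq_bigr => k _ do rewrite andbT; rewrite sum_if1.
Qed.

Lemma mulEL (A : 'M[R]_d) i l : (lamval (elam D t) *m A) i l = if i == t then A t l else 0.
Proof.
rewrite mxE; under eq_bigr => k _ do rewrite elamE mulr_natl mulrb.
case: (i == t) => /=; last by rewrite big1.
by rewrite sum_if1.
Qed.

Lemma eXe x : elam D t * x * elam D t = rE (lamval x t t).
Proof.
apply: lam_ext; apply/matrixP => i l; rewrite rEE !lamvalM mulER.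
case: (l == t); rewrite ?andbF ?andbT //.
by rewrite mulEL.
Qed.

Lemma rEt r : lamval (rE r) t t = r.
Proof. by rewrite rEE !eqxx. Qed.

Lemma psc_subproof r : cpred (eAJ D t) (pim (rE r)).
Proof.
apply/eqP; change (pim (elam D t) * pim (rE r) * pim (elam D t) = pim (rE r)).
by rewrite -!pimM eXe rEt.
Qed.
Definition psc r : corner (eAJ D t) := Corner (psc_subproof r).

Lemma liftE : lift ord0 t = inord t.+1 :> 'I_d.+1.
Proof. by apply: val_inj; rewrite /= inordK // ltnS. Qed.

Lemma rEB r r' : rE (r - r') = rE r - rE r'.
Proof.
apply: lam_ext; apply/matrixP => i l; rewrite lamvalBE !rEE.
by case: ifP; rewrite ?subr0.
Qed.

Lemma psc_eq r r' : psc r = psc r' <-> I (w t) (lift ord0 t) (r - r').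
Proof.
rewrite wE liftE; split.
  move=> /(congr1 val) /= /pimP h; have := h t t.
  by rewrite -rEB rEt (maxn_idPr (leqnSn t)).
move=> h; apply: val_inj => /=; apply/pimP => i l.
rewrite -rEB rEE; case: ifP => [/andP[/eqP -> /eqP ->]|_]; last exact: tsideal0.
by rewrite (maxn_idPr (leqnSn t)).
Qed.

Definition phif (q : RI D t) : corner (eAJ D t) := psc (repr q).
Lemma phif_pi r : phif (qpi _ r) = psc r.
Proof. by apply/psc_eq; exact: repr_pi. Qed.

Lemma phif_zmod : zmod_morphism phif.
Proof.
move=> q q'; have [r <-] := qpi_surj q; have [r' <-] := qpi_surj q'.
rewrite -qpiB !phif_pi; apply: val_inj => /=.
by rewrite rEB pimB.
Qed.

Lemma phif_mono : monoid_morphism phif.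
Proof.
split.
  rewrite -(@qpi1 _ (I (w t) (lift ord0 t))) phif_pi; apply: val_inj => /=.
  change (pim (rE 1) = pim (elam D t)); congr pim.
  apply: lam_ext; apply/matrixP => i l; rewrite rEE /= mxE.
  by case: ifP.
move=> q q'; have [r <-] := qpi_surj q; have [r' <-] := qpi_surj q'.
rewrite -qpiM !phif_pi; apply: val_inj => /=.
rewrite -pimM; congr pim.
apply: lam_ext; apply/matrixP => i l; rewrite rEE lamvalM mxE.
under eq_bigr => k _ do rewrite !rEE.
symmetry; transitivity (\sum_(k < d) (if k == t then (if (i == t) && (l == t) then r * r' else 0) else 0)); last by rewrite sum_if1.
apply: eq_bigr => k _; case: (k == t) => /=; last by rewrite andbF mul0r.
rewrite andbT; case: (i == t); case: (l == t); by rewrite ?mulr0 ?mul0r.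
Qed.

HB.instance Definition _ :=
  GRing.isZmodMorphism.Build (RI D t) (corner (eAJ D t)) phif phif_zmod.
HB.instance Definition _ :=
  GRing.isMonoidMorphism.Build (RI D t) (corner (eAJ D t)) phif phif_mono.

Lemma phif_inj : injective phif.
Proof.
move=> q q'; have [r <-] := qpi_surj q; have [r' <-] := qpi_surj q'.
by rewrite !phif_pi => /psc_eq h; apply/qpiP.
Qed.

Definition phinv (c : corner (eAJ D t)) : RI D t := qpi _ (lamval (repr (repr (cval c))) t t).
Lemma phinvK : cancel phinv phif.
Proof.
move=> c; rewrite /phinv phif_pi; apply: val_inj => /=.
rewrite -eXe !pimM pimK.
case: c => y hy /=; exact: (eqP hy).
Qed.

Lemma phif_bij : bijective phif.
Proof. exists phinv; [exact: inj_can_sym phinvK phif_inj | exact: phinvK]. Qed.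

End T.
End Main.

Theorem theorem3p6 (R : pzRingType) (d : nat) (D : dsystem R d) (t : 'I_d) :
  projective (Jquot D t) /\
  exists phi : {rmorphism RI D t -> corner (eAJ D t)}, bijective phi.
Proof.
split; first exact: (@projM _ _ D t).
by exists (@phif _ _ D t); exact: phif_bij.
Qed.
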